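(* Let $I$ be a $Q$-interval of $\mathcal{P}$ with $D(I)=\{x_1,\ldots,x_r\}$ that is a $b$-nested common interval. Then at most one of the intervals $Int(x_i)$, $1\leq i\leq r$, is $b$-large, and if such an interval exists, it is a $b$-nested common interval.
   Context: Let $n\geq 1$, $K\geq 1$ and let $\mathcal{P}=\{P_1,\ldots,P_K\}$ be permutations of $\{1,\ldots,n\}$ with $P_1=(1,2,\ldots,n)$. For integers $i\leq j$ write $(i..j)=\{i,\ldots,j\}$. A common interval of $\mathcal{P}$ is a set of integers occupying consecutive positions in every $P_k$; all have the form $(i..j)$, and singletons and $(1..n)$ are common. Fix a positive integer $b$. A common interval $I$ is $b$-small if $|I|\leq b$, $b$-large otherwise; it is $b$-nested if $|I|=1$ or $I$ strictly contains a $b$-nested common interval $J$ with $|J|\geq|I|-b$ (recursive on size). Two intervals $(i..j)$, $(k..l)$ overlap if $i<k\leq j<l$ or $k<i\leq l<j$. A common interval is strong if it overlaps no other common interval. The PQ-tree $T$: nodes are the strong common intervals ($Int(x)$ is the interval of node $x$), root $(1..n)$, leaves the singletons, parent of $y$ is the node whose interval is the smallest strong common interval strictly containing $Int(y)$. A node $x$ with children set $D$ is a $P$-node if no union $\bigcup_{z\in D'}Int(z)$, $D'\subset D$, $2\leq|D'|<|D|$, is common; otherwise it is a $Q$-node with children ordered $y_1,\ldots,y_r$ so that $\max Int(y_i)+1=\min Int(y_{i+1})$. It is known that a set is a common interval iff it is $Int(x)$ for a node $x$ or the union of the intervals of consecutive children of a unique $Q$-node. The domain $D(I)$ of a common interval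 $I$ is the set of children of $x$ if $I=Int(x)$ is strong, and otherwise the set of consecutive children of the $Q$-node whose intervals have union $I$. A $P$-interval is a strong common interval $Int(x)$ with $x$ a $P$-node; all other common intervals are $Q$-intervals. *)

(* Defs.v *)
(* Intervals (i..j) are encoded as pairs (i, j) of nats. *)
From mathcomp Require Import all_boot.
Set Implicit Arguments. Unset Strict Implicit. Unset Printing Implicit Defensive.

Definition interval := (nat * nat)%type.

Definition in_int (I : interval) (m : nat) : bool := (I.1 <= m) && (m <= I.2).
Definition isize (I : interval) : nat := I.2.+1 - I.1.

Definition all_ints (n : nat) : seq interval :=
  [seq (i, j) | i <- iota 1 n, j <- iota i (n.+1 - i)].

(* the elements of A occupy consecutive positions in the sequence p *)
Definition consec (p A : seq nat) : bool :=
  has (fun s0 => perm_eq (take (size A) (drop s0 p)) A) (iota 0 (size p).+1).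

Section PQ.
Variables (n : nat) (Ps : seq (seq nat)).

Definition common (I : interval) : bool :=
  [&& 1 <= I.1, I.1 <= I.2, I.2 <= n &
      all (fun p => consec p (iota I.1 (isize I))) Ps].

Definition overlap (I J : interval) : bool :=
  ((I.1 < J.1) && (J.1 <= I.2) && (I.2 < J.2)) ||
  ((J.1 < I.1) && (I.1 <= J.2) && (J.2 < I.2)).

Definition strong (I : interval) : bool :=
  common I && all (fun J => ~~ (common J && overlap I J)) (all_ints n).

(* inclusion and strict inclusion of the integer sets (for proper intervals) *)
Definition subint (I J : interval) : bool := (J.1 <= I.1) && (I.2 <= J.2).
Definition psubint (I J : interval) : bool := subint I J && (I != J).

(* y is a child of x in the PQ-tree: x is the smallest strong common interval
   strictly containing y *)
Definition child (x y : interval) : bool :=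
  [&& strong x, strong y, psubint y x &
      all (fun z => (strong z && psubint y z) ==> subint x z) (all_ints n)].

Definition children (x : interval) : seq interval :=
  [seq y <- all_ints n | child x y].

Definition union_is (D : seq interval) (I : interval) : Prop :=
  forall m, in_int I m = has (fun y => in_int y m) D.

Definition union_common (D : seq interval) : Prop :=
  exists I, common I /\ union_is D I.

Definition Pnode (x : interval) : Prop :=
  strong x /\
  forall D', subseq D' (children x) -> 2 <= size D' -> size D' < size (children x) ->
    ~ union_common D'.

Definition Qnode (x : interval) : Prop := strong x /\ ~ Pnode x.

Definition Pinterval (I : interval) : Prop := Pnode I.
Definition Qinterval (I : interval) : Prop := common I /\ ~ Pinterval I.

Definition domain (I : interval) (D : seq interval) : Prop :=
  (strong I /\ D = children I) \/
  (~~ strong I /\ exists x, Qnode x /\ subseq D (children x) /\ union_is D I).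

Definition large (b : nat) (I : interval) : bool := b < isize I.

(* b-nested common intervals (least fixed point = recursion on size) *)
Inductive nested (b : nat) : interval -> Prop :=
| nested_single i : common (i, i) -> nested b (i, i)
| nested_step I J : common I -> nested b J -> psubint J I ->
    isize I <= isize J + b -> nested b I.

End PQ.

(* Main.v *)
Require Import Defs.
From mathcomp Require Import all_boot.
From mathcomp Require Import zify.
Set Implicit Arguments. Unset Strict Implicit.

Section S.
Variables (n : nat) (Ps : seq (seq nat)).

Lemma common_le I : common n Ps I -> I.1 <= I.2.
Proof. by case/and4P. Qed.

Lemma strong_common I : strong n Ps I -> common n Ps I.
Proof. by case/andP. Qed.

Lemma common_all I : common n Ps I -> I \in all_ints n.
Proof.
case: I => i j /and4P [h1 h2 h3 _] /=.
rewrite /= in h1 h2 h3. rewrite /all_ints. apply: (@allpairs_f_dep _ (fun _ => nat) _ pair); rewrite mem_iota /=; lia.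
Qed.

Definition disj (y z : interval) := (y.2 < z.1) || (z.2 < y.1).

Lemma strong_tri z J : strong n Ps z -> common n Ps J ->
  [|| subint J z, subint z J | disj z J].
Proof.
case/andP => cz /allP H cJ. have := H _ (common_all cJ). rewrite cJ /=.
have := common_le cz; have := common_le cJ.
case: z {H cz} => a b'; case: J {cJ} => c d /=.
rewrite /overlap /subint /disj /=.
case: (boolP ((a < c) && (c <= b') && (b' < d) || (c < a) && (a <= d) && (d < b'))) => //.
move=> *; lia.
Qed.

Lemma subint_antisym a b : subint a b -> subint b a -> a = b.
Proof.
case: a b => a1 a2 [b1 b2]; rewrite /subint /= => /andP[h1 h2] /andP[h3 h4].
congr pair; lia.
Qed.

Lemma child_disj x y z : child n Ps x y -> child n Ps x z -> y = z \/ disj y z.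
Proof.
case/and4P => _ sy /andP[sy1 ny] /allP Hy.
case/and4P => _ sz /andP[sz1 nz] /allP Hz.
case/or3P: (strong_tri sz (strong_common sy)) => [h|h|h].
- case: (eqVneq y z) => [->|yz]; first by left.
  have := Hy z (common_all (strong_common sz)).
  rewrite sz /psubint h yz /= => hx.
  have := subint_antisym hx sz1. move=> e; subst z. by rewrite eqxx in nz.
- case: (eqVneq z y) => [->|yz]; first by left.
  have := Hz y (common_all (strong_common sy)).
  rewrite sy /psubint h yz /= => hx.
  have := subint_antisym hx sy1. move=> e; subst y. by rewrite eqxx in ny.
- right. move: h; rewrite /disj. case/orP => ->; by rewrite ?orbT.
Qed.

Lemma G b I0 : 0 < b -> nested n Ps b I0 -> forall S : interval -> Prop,
 (forall z, S z -> strong n Ps z /\ subint z I0) ->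
 (forall y z, S y -> S z -> y = z \/ disj y z) ->
 (forall y z, S y -> S z -> large b y -> large b z -> y = z) /\
 (forall z, S z -> large b z -> nested n Ps b z).
Proof.
move=> b0 HI; elim: HI => [i ci | I J cI nJ IH pJI szI] S HS Hd.
- have nl : forall z, S z -> ~~ large b z.
    move=> z /HS [sz]. have := common_le (strong_common sz).
    case: z {sz} => a c /=. rewrite /subint /large /isize /=. move=> *; lia.
  by split => [y z /nl/negP ? ? ? ?|z /nl/negP ?].
- have cJ : common n Ps J by case: nJ {IH}.
  have cJ' := common_le cJ.
  move: pJI => /andP [sJI nJI].
  have [IH1 IH2] := IH (fun z => S z /\ subint z J)
    (fun z '(conj h1 h2) => conj (proj1 (HS z h1)) h2)
    (fun y z '(conj h1 _) '(conj h2 _) => Hd y z h1 h2).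
  have small : forall z, S z -> disj z J -> ~~ large b z.
    move=> z /HS [sz szi]. have := common_le (strong_common sz).
    move: szI sJI szi cJ'.
        rewrite /subint /large /isize /disj /=. move=> *; lia.
  have big : forall z, S z -> subint J z -> nested n Ps b z.
    move=> z Sz hJz. case: (eqVneq J z) => [<-//|Jz].
    have [sz szi] := HS z Sz.
    apply: (nested_step (strong_common sz) nJ); first by rewrite /psubint hJz Jz.
    move: szI szi.     rewrite /subint /isize /=. move=> *; lia.
  split.
  { move=> y z Sy Sz ly lz.
    have [sy syi] := HS y Sy. have [sz szi] := HS z Sz.
    have ney := common_le (strong_common sy). have nez := common_le (strong_common sz).
    case/or3P: (strong_tri sy cJ) => [hy|hy|hy]; last by rewrite (negPf (small y Sy hy)) in ly.
    all: case/or3P: (strong_tri sz cJ) => [hz|hz|hz]; last by rewrite (negPf (small z Sz hz)) in lz.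
    all: try by apply: IH1 => //; split.
    all: case: (Hd y z Sy Sz) => // dyz.
    all: exfalso; clear -hy hz dyz ney nez cJ'; rewrite /subint /disj in hy hz dyz; lia. }
  move=> z Sz lz. have [sz _] := HS z Sz.
    case/or3P: (strong_tri sz cJ) => [hz|hz|hz].
    * exact: big.
    * exact: IH2.
    * by rewrite (negPf (small z Sz hz)) in lz.
Qed.

End S.

Theorem lemma4 (n b : nat) (rest : seq (seq nat)) :
  1 <= n -> 0 < b ->
  all (fun p => perm_eq p (iota 1 n)) rest ->
  let Ps := iota 1 n :: rest in
  forall (I : interval) (D : seq interval),
    Qinterval n Ps I -> domain n Ps I D -> nested n Ps b I ->
    (forall y z, y \in D -> z \in D -> large b y -> large b z -> y = z) /\
    (forall y, y \in D -> large b y -> nested n Ps b y).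
Proof.
move=> _ b0 _ Ps I D _ HD HN.
have [x [Hx Hs]] : exists x, (forall z, z \in D -> child n Ps x z) /\
   (forall z, z \in D -> subint z I).
  case: HD => [[sI eD]|[_ [x [_ [sub un]]]]].
  + exists I; split => z; rewrite eD mem_filter => /andP [hc _] //.
    by move: hc => /and4P [_ _ /andP [h _] _].
  + exists x; split => z zD.
      have zc : z \in children n Ps x := mem_subseq sub zD.
      by move: zc; rewrite mem_filter => /andP [].
    have zc : z \in children n Ps x := mem_subseq sub zD.
    move: zc; rewrite mem_filter => /andP [/and4P [_ sz _ _] _].
    have le := common_le (strong_common sz).
    have h1 := un z.1. have h2 := un z.2.
    have hz1 : has (fun y => in_int y z.1) D.
      by apply/hasP; exists z => //; rewrite /in_int leqnn le.
    have hz2 : has (fun y => in_int y z.2) D.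
      by apply/hasP; exists z => //; rewrite /in_int leqnn le.
    move: h1 h2; rewrite hz1 hz2 /in_int /subint => /andP[? ?] /andP[? ?].
    by apply/andP; split.
apply: (G b0 HN (S := fun z => z \in D)).
- move=> z zD. split => //; last exact: Hs.
  by case/and4P: (Hx z zD).
- move=> y z yD zD. exact: child_disj (Hx y yD) (Hx z zD).
Qed.
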